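(* Let $\Gamma=(V,m,\tau)$ be a weak $W$-graph and let $A\subseteq\Delta$. Then the kernel of the operator $Q(A)=\frac{1}{|W(A)|}\sum_{g\in W(A)}g$ acting on $\mathbb{C}V$ is exactly the span of $V(A,-)\cup V(A,0)$.
   Context: $W$ is a Weyl group with a fixed set $\Delta$ of simple roots; for a root $\alpha$, $s_\alpha$ is the reflection in the hyperplane orthogonal to $\alpha$. A weak $W$-graph is a triple $\Gamma=(V,m,\tau)$ where $V$ is a finite set, $m:V\times V\to\mathbb{C}$ is a map, and $\tau$ is a map from $V$ to the power set of $\Delta$, such that the linear maps $s_\alpha:\mathbb{C}V\to\mathbb{C}V$ ($\alpha\in\Delta$) given on basis vectors by $s_\alpha(v)=-v$ if $\alpha\in\tau(v)$ and $s_\alpha(v)=v-\sum_{u\in V,\ \alpha\in\tau(u)} m(u,v)u$ if $\alpha\notin\tau(v)$ define a representation of $W$ on $\mathbb{C}V$. For $A\subseteq\Delta$, $W(A)$ is the subgroup of $W$ generated by $\{s_\alpha:\alpha\in A\}$, and $V(A,-)=\{v\in V: A\subseteq\tau(v)\}$, $V(A,0)=\{v\in V: A\cap\tau(v)\neq\emptyset,\ A\not\subseteq\tau(v)\}$. *)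

(* Defs.v *)
From HB Require Import structures.
From mathcomp Require Import all_boot all_order all_algebra all_fingroup.
From mathcomp Require Import mxrepresentation.
From mathcomp Require Import complex.
From mathcomp Require Import Rstruct.
From Stdlib Require Import Reals.
Set Implicit Arguments. Unset Strict Implicit. Unset Printing Implicit Defensive.
Import Order.TTheory GRing.Theory Num.Theory.
Local Open Scope ring_scope.

Notation RE := Rdefinitions.R.
Notation CC := (Rdefinitions.R[i]).

Definition dotv n (x y : 'rV[RE]_n) : RE := (x *m y^T) 0 0.

Definition refl_vec n (a x : 'rV[RE]_n) : 'rV[RE]_n :=
  x - ((2 * dotv x a) / dotv a a) *: a.

(* matrix of that reflection, acting on row vectors: x *m refl_mx a = refl_vec a x *)
Definition refl_mx n (a : 'rV[RE]_n) : 'M[RE]_n :=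
  1%:M - ((2 / dotv a a) *: (a^T *m a)).

(* A (reduced, crystallographic) root system in 'rV[RE]_n, listed without repetition. *)
Definition is_root_system n (Phi : seq 'rV[RE]_n) : Prop :=
  [/\ uniq Phi /\ 0 \notin Phi,
      row_full (\matrix_(i < size Phi) nth 0 Phi i),
      {in Phi &, forall a b, refl_vec a b \in Phi},
      {in Phi &, forall a b, exists z : int, 2 * dotv b a / dotv a a = z%:~R}
    & {in Phi, forall a (c : RE), c *: a \in Phi -> c = 1 \/ c = -1}].

(* delta : 'I_l -> 'rV_n enumerates a base (set of simple roots) Delta of Phi. *)
Definition is_base n l (Phi : seq 'rV[RE]_n) (delta : 'I_l -> 'rV[RE]_n) : Prop :=
  [/\ injective delta, forall i, delta i \in Phi,
      row_free (\matrix_(i < l) delta i)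
    & {in Phi, forall b, exists c : 'I_l -> int,
         b = \sum_(i < l) (c i)%:~R *: delta i /\
         ((forall i, 0 <= c i) \/ (forall i, c i <= 0))}].

(* W (a finite group) is, via act, isomorphic to the Weyl group of Phi, i.e. the
   group generated by all reflections s_a (a in Phi); s i is the simple
   reflection s_(delta i). *)
Definition weyl_realization n l (Phi : seq 'rV[RE]_n) (delta : 'I_l -> 'rV[RE]_n)
  (gT : finGroupType) (W : {group gT}) (s : 'I_l -> gT) (act : gT -> 'M[RE]_n) : Prop :=
  [/\ {in W &, injective act},
      {in W &, {morph act : x y / (x * y)%g >-> x *m y}},
      (forall i, s i \in W /\ act (s i) = refl_mx (delta i))
    & exists r : seq gT, (W :=: <<[set g in r]>>)%g /\ map act r = map (@refl_mx n) Phi].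

Definition WA (gT : finGroupType) l (s : 'I_l -> gT) (A : {set 'I_l}) : {set gT} :=
  <<s @: A>>%g.

Section WGraph.
Variables (V : finType) (l : nat).

Definition bvec (v : V) : 'cV[CC]_#|V| := delta_mx (enum_rank v) 0.

(* matrix (acting on column vectors) of the linear map s_alpha on CV:
   column v is s_alpha(v) *)
Definition Smx (m : V -> V -> CC) (tau : V -> {set 'I_l}) (al : 'I_l) : 'M[CC]_#|V| :=
  \matrix_(i, j)
    let u := enum_val i in let v := enum_val j in
    if al \in tau v then (if u == v then -1 else 0)
    else (u == v)%:R - (if al \in tau u then m u v else 0).

(* rho is the representation of W on CV given by the weak W-graph (V,m,tau):
   a group homomorphism W -> GL(CV) with rho(s_alpha) = the map s_alpha above.
   (V,m,tau) is a weak W-graph iff such a rho exists; it is then unique. *)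
Definition weak_W_graph_repr (gT : finGroupType) (W : {group gT}) (s : 'I_l -> gT)
  (m : V -> V -> CC) (tau : V -> {set 'I_l}) (rho : gT -> 'M[CC]_#|V|) : Prop :=
  mx_repr W rho /\ forall al, rho (s al) = Smx m tau al.

Definition VAminus (tau : V -> {set 'I_l}) (A : {set 'I_l}) : {set V} :=
  [set v | A \subset tau v].

Definition VAzero (tau : V -> {set 'I_l}) (A : {set 'I_l}) : {set V} :=
  [set v | (A :&: tau v != set0) && ~~ (A \subset tau v)].

Definition QA (gT : finGroupType) (s : 'I_l -> gT) (rho : gT -> 'M[CC]_#|V|)
  (A : {set 'I_l}) : 'M[CC]_#|V| :=
  (#|WA s A|%:R)^-1 *: \sum_(g in WA s A) rho g.

Definition in_span (S : {set V}) (x : 'cV[CC]_#|V|) : Prop :=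
  exists c : V -> CC, x = \sum_(v in S) c v *: bvec v.

End WGraph.

(* Main.v *)
Require Import Defs.
From HB Require Import structures.
From mathcomp Require Import all_boot all_order all_algebra all_fingroup.
From mathcomp Require Import mxrepresentation complex Rstruct.
From Stdlib Require Import Reals.
Import Order.TTheory GRing.Theory Num.Theory.
Local Open Scope ring_scope.
Set Implicit Arguments. Unset Strict Implicit.

Section Aux.
Variables (V : finType) (l : nat).
Definition suppS (S : {set V}) (x : 'cV[CC]_#|V|) :=
  forall i, enum_val i \notin S -> x i 0 = 0.

Lemma sum_bvec_entry (S : {set V}) (c : V -> CC) i :
  (\sum_(v in S) c v *: bvec v) i 0 =
  if enum_val i \in S then c (enum_val i) else 0.
Proof.
rewrite summxE.
have F : forall v, v != enum_val i -> (c v *: bvec v) i 0 = 0.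
  move=> v hv; rewrite !mxE /= andbT.
  case: eqP => [e|]; last by rewrite mulr0.
  by move: hv; rewrite e enum_rankK eqxx.
case: ifP => hi.
  rewrite (bigD1 (enum_val i)) //= big1 ?addr0.
    by rewrite !mxE enum_valK eqxx mulr1.
  by move=> v /andP[_ hv]; apply: F.
apply: big1 => v hv; apply: F; apply/eqP => e; by rewrite -e hv in hi.
Qed.

Lemma supp_in_span S x : suppS S x -> in_span S x.
Proof.
move=> H; exists (fun v => x (enum_rank v) 0).
apply/matrixP => i j; rewrite !ord1 sum_bvec_entry.
case: ifP => hi; first by rewrite enum_valK.
by rewrite H // hi.
Qed.

Lemma suppD S x y : suppS S x -> suppS S y -> suppS S (x + y).
Proof. by move=> hx hy i hi; rewrite mxE hx ?hy ?addr0. Qed.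
Lemma suppN S x : suppS S x -> suppS S (- x).
Proof. by move=> hx i hi; rewrite mxE hx ?oppr0. Qed.
Lemma suppZ S a x : suppS S x -> suppS S (a *: x).
Proof. by move=> hx i hi; rewrite mxE hx ?mulr0. Qed.
Lemma suppSum S (I : finType) (P : pred I) (F : I -> 'cV[CC]_#|V|) :
  (forall k, P k -> suppS S (F k)) -> suppS S (\sum_(k | P k) F k).
Proof. by move=> h i hi; rewrite summxE big1 // => k hk; rewrite h. Qed.

Lemma Smx_row (m : V -> V -> CC) (tau : V -> {set 'I_l}) al (x : 'cV[CC]_#|V|) i :
  al \notin tau (enum_val i) -> (Smx m tau al *m x) i 0 = x i 0.
Proof.
move=> hal; rewrite mxE (bigD1 i) //= big1 ?addr0.
  by rewrite /Smx mxE (negbTE hal) eqxx subr0 mul1r.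
move=> j hj; rewrite /Smx mxE.
have ne : (enum_val i == enum_val j) = false.
  by apply/negbTE; apply: contra hj => /eqP /enum_val_inj ->.
rewrite ne; case: ifP => _; first by rewrite mul0r.
by rewrite (negbTE hal) subr0 mul0r.
Qed.

Lemma Smx_bvec (m : V -> V -> CC) (tau : V -> {set 'I_l}) al v :
  al \in tau v -> Smx m tau al *m bvec v = - bvec v.
Proof.
move=> hal; rewrite /bvec -colE; apply/matrixP => i j.
rewrite ord1 !mxE /= enum_rankK hal andbT.
case: eqP => [e|ne]; first by rewrite -e enum_valK eqxx.
case: (i =P enum_rank v) => [e|]; last by rewrite mulr0n oppr0.
by case: ne; rewrite e enum_rankK.
Qed.
End Aux.
Theorem proposition2p6
  (n l : nat) (Phi : seq 'rV[RE]_n) (delta : 'I_l -> 'rV[RE]_n)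
  (gT : finGroupType) (W : {group gT}) (s : 'I_l -> gT) (act : gT -> 'M[RE]_n)
  (HPhi : is_root_system Phi) (HDelta : is_base Phi delta)
  (HW : weyl_realization Phi delta W s act)
  (V : finType) (m : V -> V -> CC) (tau : V -> {set 'I_l})
  (rho : gT -> 'M[CC]_#|V|) (Hrho : weak_W_graph_repr W s m tau rho)
  (A : {set 'I_l}) (HA : A != set0) :
  forall x : 'cV[CC]_#|V|,
    QA s rho A *m x = 0 <-> in_span (VAminus tau A :|: VAzero tau A) x.
Proof.
move: Hrho => [[rho1 rhoM] rhoS].
case: HW => _ _ sW _.
set S := VAminus tau A :|: VAzero tau A.
have HsubW : <<s @: A>>%g \subset W.
  by rewrite gen_subG; apply/subsetP => g /imsetP[i _ ->]; case: (sW i).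
have inW : forall g, g \in <<s @: A>>%g -> g \in W by move=> g; apply: (subsetP HsubW).
have QH : forall h, h \in <<s @: A>>%g -> QA s rho A *m rho h = QA s rho A.
  move=> h hh; rewrite /QA -scalemxAl mulmx_suml; congr (_ *: _).
  rewrite [RHS](reindex_inj (mulIg h)) /=; apply: eq_big => g.
    by rewrite /WA groupMr.
  by move=> hg; rewrite rhoM // inW.
have inS : forall v al, al \in A -> al \in tau v -> v \in S.
  move=> v al hA ht; rewrite !inE; case: (A \subset tau v) => //=.
  rewrite andbT; apply/set0Pn; exists al; by rewrite inE hA ht.
move=> x; split; last first.
  move=> [c ->]; rewrite mulmx_sumr; apply: big1 => v hv; rewrite -scalemxAr.
  have [al hal1 hal2] : exists2 al, al \in A & al \in tau v.
    move: hv; rewrite !inE; case/orP => [hsub|/andP[/set0Pn [al] ] ].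
      by case/set0Pn: HA => al hal; exists al => //; apply: (subsetP hsub).
    by rewrite inE => /andP[h1 h2] _; exists al.
  have sH : s al \in <<s @: A>>%g by rewrite mem_gen // imset_f.
  set y := QA s rho A *m bvec v.
  have ey : y = - y.
    by rewrite /y -{1}(QH _ sH) -mulmxA rhoS Smx_bvec // mulmxN.
  have : 2%:R *: y = 0 by rewrite scaler_nat mulr2n {1}ey addNr.
  move/eqP; rewrite scaler_eq0 pnatr_eq0 /= => /eqP ->; by rewrite scaler0.
move=> hQ; apply: supp_in_span.
have Pgen : forall al (y : 'cV[CC]_#|V|), al \in A -> suppS S (y - rho (s al) *m y).
  move=> al y hA i hi; rewrite mxE (mxE _ _ i 0) rhoS Smx_row ?subrr //.
  by apply: contra hi; apply: inS.
have Pall : forall g, g \in <<s @: A>>%g -> forall y : 'cV[CC]_#|V|, suppS S (y - rho g *m y).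
  move=> g /gen_prodgP [k [c hc ->]].
  elim: k c hc => [|k IH] c hc y.
    by rewrite big_ord0 rho1 mul1mx subrr => i _; rewrite mxE.
  rewrite big_ord_recl.
  have hc0 : c ord0 \in W by apply: inW; rewrite mem_gen.
  have hc1 : (\prod_(i < k) c (lift ord0 i))%g \in W.
    by apply: group_prod => i _; apply: inW; rewrite mem_gen.
  have [al hal e0] : exists2 al, al \in A & c ord0 = s al.
    by case/imsetP: (hc ord0) => al hal ->; exists al.
  rewrite rhoM // -mulmxA.
  set z := rho _ *m y.
  have -> : y - rho (c ord0) *m z = (y - z) + (z - rho (c ord0) *m z).
    by rewrite addrA subrK.
  apply: suppD; first by apply: IH => i.
  by rewrite e0; apply: Pgen.
have -> : x = (#|<<s @: A>>%g|%:R)^-1 *: \sum_(g in <<s @: A>>%g) (x - rho g *m x).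
  rewrite sumrB sumr_const scalerBr -[x *+ _]scaler_nat scalerA mulVf; last first.
    by rewrite pnatr_eq0 -lt0n cardG_gt0.
  rewrite scale1r -mulmx_suml scalemxAl.
  by rewrite -/(QA s rho A) hQ subr0.
apply: suppZ; apply: suppSum => g hg; exact: Pall.
Qed.
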